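(* Fix integers $n,d,k,L\ge1$. Consider the normalized linear Transformer acting on $Z_l\in\mathbb{R}^{(d+k)\times n}$ by $$\hat Z_{l+1}=Z_l+W^V_l Z_l Z_l^\top (W^Q_l)^\top W^K_l Z_l+W^R_l Z_l,\qquad Z_{l+1}=\mathrm{normalize}(\hat Z_{l+1}),$$ with weights in $\mathbb{R}^{(d+k)\times(d+k)}$, where $\mathrm{normalize}$ replaces each row $j\in\{d+1,\dots,d+k\}$ of its argument by that row divided by its Euclidean norm (and leaves rows $1,\dots,d$ unchanged). Write $Z_l^\top=\begin{bmatrix}B_l, & \Phi_l\end{bmatrix}$ with $B_l\in\mathbb{R}^{n\times d}$, $\Phi_l\in\mathbb{R}^{n\times k}$, and initialize $B_0=B$, the incidence matrix of a graph, and $\Phi_0$ an arbitrary matrix of full column rank. Then there exists a choice of $W^V,W^Q,W^K,W^R$ such that every $k+1$ consecutive layers of the Transformer implement one iteration of subspace iteration for the Laplacian $\mathcal{L}=BB^\top$ (namely $\Phi\mapsto \mathrm{QR}(\mathcal{L}\Phi)$, where $\mathrm{QR}(M)$ is the $Q$ factor of a QR decomposition of $M$). Consequently, the output $\Phi_L$ of an $L$-layer Transformer approximates the top-$k$ eigenvectors of $\mathcal{L}$ to the same accuracy as $L/(k+1)$ steps of subspace iteration started from $\Phi_0$.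
   Context: A graph has $n$ vertices, $d$ edges and positive edge resistances $r_j$; graphs are connected. With an arbitrary edge orientation, the incidence matrix $B\in\mathbb{R}^{n\times d}$ has $B_{ij}=-1/\sqrt{r_j}$ if $e_j$ leaves vertex $i$, $+1/\sqrt{r_j}$ if it enters vertex $i$, and $0$ otherwise; $\mathcal{L}=BB^\top$. Subspace iteration (block power method): start from $\Phi_0\in\mathbb{R}^{n\times k}$ of full column rank and repeat $\hat\Phi_{i+1}=\mathcal{L}\Phi_i$, $\Phi_{i+1}=\mathrm{QR}(\hat\Phi_{i+1})$. *)

(* Defs.v *)
From mathcomp Require Import all_boot all_order all_algebra.
Set Implicit Arguments. Unset Strict Implicit. Unset Printing Implicit Defensive.
Import Order.TTheory GRing.Theory Num.Theory.
Local Open Scope ring_scope.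

(* Incidence matrix B (n x d) of a graph with edge j oriented from src j to dst j
   and resistance r j: B i j = -1/sqrt(r j) if e_j leaves i, +1/sqrt(r j) if it enters i. *)
Definition incidence (R : rcfType) (n d : nat) (src dst : 'I_d -> 'I_n)
  (r : 'I_d -> R) : 'M[R]_(n, d) :=
  \matrix_(i, j) (if i == src j then - (Num.sqrt (r j))^-1
                  else if i == dst j then (Num.sqrt (r j))^-1 else 0).

Definition adj (n d : nat) (src dst : 'I_d -> 'I_n) : rel 'I_n :=
  fun x y => [exists j, ((src j == x) && (dst j == y)) || ((src j == y) && (dst j == x))].

Definition graph_connected (n d : nat) (src dst : 'I_d -> 'I_n) : Prop :=
  forall u v : 'I_n, connect (adj src dst) u v.

Definition normalize (R : rcfType) (d k n : nat) (Z : 'M[R]_(d + k, n)) : 'M[R]_(d + k, n) :=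
  col_mx (usubmx Z)
    (\matrix_(i, j) (dsubmx Z i j / Num.sqrt (\sum_(m < n) dsubmx Z i m ^+ 2))).

Definition tf_layer (R : rcfType) (d k n : nat) (WV WQ WK WR : 'M[R]_(d + k))
  (Z : 'M[R]_(d + k, n)) : 'M[R]_(d + k, n) :=
  normalize (Z + WV *m Z *m Z^T *m WQ^T *m WK *m Z + WR *m Z).

Fixpoint tf_run (R : rcfType) (d k n : nat) (WV WQ WK WR : nat -> 'M[R]_(d + k))
  (Z0 : 'M[R]_(d + k, n)) (l : nat) : 'M[R]_(d + k, n) :=
  match l with
  | 0 => Z0
  | l'.+1 => tf_layer (WV l') (WQ l') (WK l') (WR l') (tf_run WV WQ WK WR Z0 l')
  end.

Definition Phi_of (R : rcfType) (d k n : nat) (Z : 'M[R]_(d + k, n)) : 'M[R]_(n, k) :=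
  (dsubmx Z)^T.

(* Q is the Q factor of a QR decomposition M = Q Rm of M (n x k): orthonormal
   columns and Rm upper triangular with positive diagonal (standard convention,
   making Q unique when M has full column rank). *)
Definition is_QR_Q (R : rcfType) (n k : nat) (M Q : 'M[R]_(n, k)) : Prop :=
  Q^T *m Q = 1%:M /\
  exists Rm : 'M[R]_k,
    [/\ forall i j : 'I_k, (j < i)%N -> Rm i j = 0,
        forall i : 'I_k, 0 < Rm i i
      & M = Q *m Rm].

(* Main.v *)
Require Import Defs.
From mathcomp Require Import all_boot all_order all_algebra.
Import Order.TTheory GRing.Theory Num.Theory.
Local Open Scope ring_scope.
Set Implicit Arguments. Unset Strict Implicit.

Section S.
Variable R : rcfType.

Definition colnorm (n k : nat) (W : 'M[R]_(n, k)) : 'M[R]_(n, k) :=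
  \matrix_(i, j) (W i j / Num.sqrt (\sum_(m < n) W m j ^+ 2)).

Definition ut (k : nat) (S : 'M[R]_k) :=
  (forall i j : 'I_k, (j < i)%N -> S i j = 0) /\ (forall i, 0 < S i i).

Lemma sum_delta (k : nat) (f : 'I_k -> R) a : \sum_c (c == a)%:R * f c = f a.
Proof.
rewrite (bigD1 a) //= eqxx mul1r big1 ?addr0 // => c /negbTE ->; by rewrite mul0r.
Qed.

Lemma ut_mul k (A B : 'M[R]_k) : ut A -> ut B -> ut (A *m B).
Proof.
move=> [A0 Ap] [B0 Bp]; split.
  move=> i j ji; rewrite mxE big1 // => c _.
  case: (ltnP c i) => ci; first by rewrite A0 ?mul0r.
  by rewrite B0 ?mulr0 //; apply: leq_trans ji ci.
move=> i; rewrite mxE (bigD1 i) //= big1 ?addr0; first by rewrite mulr_gt0.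
move=> c ci; case: (ltnP c i) => hc; first by rewrite A0 ?mul0r.
rewrite B0 ?mulr0 //; rewrite ltn_neqAle hc andbT; apply/eqP => /val_inj/eqP.
by rewrite eq_sym (negbTE ci).
Qed.

Lemma ut_diag k (c : 'rV[R]_k) : (forall i, 0 < c 0 i) -> ut (diag_mx c).
Proof.
move=> cp; split => [i j ji|i]; rewrite mxE.
  by case: eqP ji => // ->; rewrite ltnn.
by rewrite eqxx mulr1n.
Qed.

Lemma col_pos n k (W : 'M[R]_(n, k)) : (k <= \rank W)%N ->
  forall b, 0 < \sum_r W r b ^+ 2.
Proof.
move=> hr b.
have hf : row_free W^T by rewrite /row_free mxrank_tr eqn_leq rank_leq_col.
have ge0 : 0 <= \sum_r W r b ^+ 2 by apply: sumr_ge0 => r _; apply: sqr_ge0.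
rewrite lt_def ge0 andbT; apply/eqP => h0.
have z := psumr_eq0P (fun r _ => sqr_ge0 (W r b)) h0.
have : delta_mx (0 : 'I_1) b *m W^T = (0 : 'M_(1, k)) *m W^T.
  rewrite mul0mx -rowE; apply/matrixP => i j; rewrite !mxE.
  by apply/eqP; rewrite -sqrf_eq0 (z j).
move/(row_free_inj hf)/matrixP/(_ 0 b); rewrite !mxE !eqxx /=.
by move/eqP; rewrite oner_eq0.
Qed.

Definition cn n k (W : 'M[R]_(n, k)) : 'rV[R]_k := \row_b Num.sqrt (\sum_r W r b ^+ 2).

Lemma colnorm_fact n k (W : 'M[R]_(n, k)) : (forall b, 0 < \sum_r W r b ^+ 2) ->
  W = colnorm W *m diag_mx (cn W).
Proof.
move=> hp; rewrite mul_mx_diag; apply/matrixP => i j; rewrite !mxE divfK //.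
by rewrite gt_eqF // sqrtr_gt0.
Qed.

Lemma cn_pos n k (W : 'M[R]_(n, k)) : (forall b, 0 < \sum_r W r b ^+ 2) ->
  forall i, 0 < cn W 0 i.
Proof. by move=> hp i; rewrite mxE sqrtr_gt0. Qed.

Lemma colnorm_gram n k (W : 'M[R]_(n, k)) a b :
  ((colnorm W)^T *m colnorm W) a b = (W^T *m W) a b / (cn W 0 a * cn W 0 b).
Proof.
rewrite !mxE mulr_suml; apply: eq_bigr => r _; rewrite !mxE mulf_div.
done.
Qed.

Lemma gram_diag n k (W : 'M[R]_(n, k)) a : 0 < \sum_r W r a ^+ 2 ->
  ((colnorm W)^T *m colnorm W) a a = 1.
Proof.
move=> hp; rewrite colnorm_gram.
have -> : (W^T *m W) a a = cn W 0 a ^+ 2.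
  rewrite !mxE sqr_sqrtr; last by apply: sumr_ge0 => r _; apply: sqr_ge0.
  by apply: eq_bigr => r _; rewrite mxE expr2.
by rewrite -expr2 divff // expf_neq0 // gt_eqF // mxE sqrtr_gt0.
Qed.

Lemma lap_inv n k (M : 'M[R]_(n, k)) : \rank M = k ->
  exists S, ut S /\ M = colnorm M *m S.
Proof.
move=> hr; have hp := col_pos (eq_leq (esym hr)).
exists (diag_mx (cn M)); split; last exact: colnorm_fact.
exact/ut_diag/cn_pos.
Qed.

Definition Nm n k (m : nat) (Psi : 'M[R]_(n, k)) : 'M[R]_k :=
  diag_mx (\row_(i < k) ((i : nat) < m)%:R) *m (Psi^T *m Psi)
    *m diag_mx (\row_(i < k) ((i : nat) == m)%:R).

Lemma Nm_entry n k m (Psi : 'M[R]_(n, k)) a b :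
  Nm m Psi a b = if ((a < m)%N && (b == m :> nat)) then (Psi^T *m Psi) a b else 0.
Proof.
rewrite /Nm mul_mx_diag mul_diag_mx !mxE.
by case: (a < m)%N; case: (b == m :> nat); rewrite ?mul1r ?mulr1 ?mul0r ?mulr0.
Qed.

Lemma gs_step n k (M : 'M[R]_(n, k)) (Psi : 'M[R]_(n, k)) (S : 'M[R]_k) (m : nat) :
  (m < k)%N -> \rank M = k -> ut S -> M = Psi *m S ->
  (forall a b : 'I_k, (a < m)%N -> (b < m)%N -> (Psi^T *m Psi) a b = (a == b)%:R) ->
  let Psi' := colnorm (Psi *m (1%:M - Nm m Psi)) in
  (exists S', ut S' /\ M = Psi' *m S') /\
  (forall a b : 'I_k, (a < m.+1)%N -> (b < m.+1)%N -> (Psi'^T *m Psi') a b = (a == b)%:R).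
Proof.
move=> mk hr uS hM hG Psi'.
set N := Nm m Psi; set G := Psi^T *m Psi; set W := Psi *m (1%:M - N).
have NN : N *m N = 0.
  apply/matrixP => a b; rewrite !mxE big1 // => c _.
  rewrite /N !Nm_entry; case: ifP => [/andP[_ /eqP cm]|]; last by rewrite mul0r.
  by rewrite cm ltnn /= mulr0.
have PsiW : Psi = W *m (1%:M + N).
  have E : (1%:M - N) *m (1%:M + N) = 1%:M.
    by rewrite mulmxBl mul1mx mulmxDr mulmx1 NN addr0 addrK.
  by rewrite /W -mulmxA E mulmx1.
have rW : (k <= \rank W)%N.
  rewrite -{1}hr hM PsiW -mulmxA; exact: mxrankM_maxl.
have hp := col_pos rW.
have WE := colnorm_fact hp.
split.
  exists (diag_mx (cn W) *m (1%:M + N) *m S); split.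
    apply: ut_mul => //; apply: ut_mul; first exact/ut_diag/cn_pos.
    split => [i j ji|i]; rewrite [fun_of_matrix (_ + _) _ _]mxE /N Nm_entry mxE.
      have -> : (i == j) = false by case: eqP ji => // ->; rewrite ltnn.
      case: ifP => [/andP[im /eqP jm]|]; last by rewrite addr0.
      by move: (ltn_trans ji im); rewrite jm ltnn.
    rewrite eqxx; case: ifP => [/andP[im /eqP jm]|]; last by rewrite addr0.
    by move: im; rewrite jm ltnn.
  by rewrite hM PsiW {1}WE !mulmxA.
have key : forall a b : 'I_k, (a < m)%N -> (b < m.+1)%N -> a != b -> (W^T *m W) a b = 0.
  move=> a b am bm ab.
  rewrite /W trmx_mul.
  have -> : (1%:M - N)^T *m Psi^T *m (Psi *m (1%:M - N)) = (1%:M - N)^T *m (G *m (1%:M - N)) by rewrite /G !mulmxA.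
  rewrite mxE (eq_bigr (fun c => (c == a)%:R * (G *m (1%:M - N)) c b)); last first.
    move=> c _; rewrite [fun_of_matrix (_^T) _ _]mxE [fun_of_matrix (_ - _) _ _]mxE [fun_of_matrix 1%:M _ _]mxE [fun_of_matrix (- _) _ _]mxE /N Nm_entry.
    have -> : ((a : nat) == m) = false by apply/negbTE; rewrite neq_ltn am.
    by rewrite andbF subr0.
  rewrite sum_delta mulmxBr mulmx1 [fun_of_matrix (_ - _) _ _]mxE [fun_of_matrix (- _) _ _]mxE [fun_of_matrix (G *m N) _ _]mxE.
  case: (eqVneq (b : nat) m) => bm'.
    rewrite (eq_bigr (fun c => (c == a)%:R * G a b)); last first.
      move=> c _; rewrite /N Nm_entry bm' eqxx andbT.
      case: (ltnP c m) => cm.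
        rewrite /G (hG a c) // -/G; case: (eqVneq a c) => [->|ac] //; by rewrite !mul0r.
      have -> : (c == a) = false.
        by apply/negbTE; apply: contraTneq cm => ->; rewrite -ltnNge.
      by rewrite mulr0 mul0r.
    by rewrite sum_delta subrr.
  rewrite big1 ?subr0; last by move=> c _; rewrite /N Nm_entry (negbTE bm') andbF mulr0.
  rewrite hG ?(negbTE ab) //.
  by rewrite ltn_neqAle bm' -ltnS.
move=> a b am bm; rewrite colnorm_gram.
case: (eqVneq a b) => [<-|ab].
  by rewrite -colnorm_gram gram_diag.
case: (ltnP a m) => am'.
  by rewrite key ?mul0r.
have bm' : (b < m)%N.
  rewrite ltn_neqAle -ltnS bm andbT; apply: contra ab => /eqP bme.
  by rewrite -val_eqE /= bme eqn_leq am' andbT -ltnS.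
have -> : (W^T *m W) a b = (W^T *m W)^T b a by rewrite [in RHS]mxE.
by rewrite trmx_mul trmxK key 1?eq_sym ?mul0r.
Qed.
Lemma normalize_col (d k n : nat) (X : 'M[R]_(d, n)) (Y : 'M[R]_(k, n)) :
  normalize (col_mx X Y) = col_mx X (colnorm Y^T)^T.
Proof.
rewrite /normalize col_mxKu col_mxKd; congr col_mx.
by apply/matrixP => i j; rewrite !mxE; congr (_ / Num.sqrt _); apply: eq_bigr => m _; rewrite mxE.
Qed.
Lemma layer_eq (d k n : nat) (X : 'M[R]_(d, n)) (Psi : 'M[R]_(n, k))
  (V P Rb : 'M[R]_k) (Kt : 'M[R]_d) :
  tf_layer (block_mx 0 0 0 V) 1%:M (block_mx Kt 0 0 P) (block_mx 0 0 0 Rb) (col_mx X Psi^T)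
  = col_mx X (colnorm (Psi + X^T *m Kt^T *m X *m Psi *m V^T
                        + Psi *m P^T *m (Psi^T *m Psi) *m V^T + Psi *m Rb^T))^T.
Proof.
rewrite /tf_layer trmx1 mulmx1 !mul_block_col tr_col_mx mul_col_row mulmx_block mul_block_col.
rewrite !mul0mx !mulmx0 !add0r !addr0 !mul0mx !add0r !add_col_mx !addr0 normalize_col.
congr (col_mx _ (colnorm _)^T).
rewrite !linearD /= !trmx_mul !trmxK !mulmxA.
by rewrite !addrA.
Qed.
End S.

Definition jj (k l : nat) := (l %% k.+1)%N.
Definition Vp (R : rcfType) (k l : nat) : 'M[R]_k :=
  if jj k l == 0%N then 1%:M else - diag_mx (\row_(i < k) ((i : nat) == (jj k l).-1)%:R).
Definition Ktp (R : rcfType) (d k l : nat) : 'M[R]_d :=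
  if jj k l == 0%N then 1%:M else 0.
Definition Pp (R : rcfType) (k l : nat) : 'M[R]_k :=
  if jj k l == 0%N then 0 else diag_mx (\row_(i < k) ((i : nat) < (jj k l).-1)%:R).
Definition Rbp (R : rcfType) (k l : nat) : 'M[R]_k :=
  if jj k l == 0%N then - 1%:M else 0.

Unset Implicit Arguments.
Set Strict Implicit.

Theorem lemma6 (R : rcfType) (n d k L : nat) :
  (1 <= n)%N -> (1 <= d)%N -> (1 <= k)%N -> (1 <= L)%N ->
  exists WV WQ WK WR : nat -> 'M[R]_(d + k),
  forall (src dst : 'I_d -> 'I_n) (r : 'I_d -> R),
    (forall j, src j != dst j) ->
    (forall j, 0 < r j) ->
    graph_connected src dst ->
  forall Phi0 : 'M[R]_(n, k), \rank Phi0 = k ->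
  let B := incidence src dst r in
  let Z := tf_run WV WQ WK WR (col_mx B^T Phi0^T) in
  forall t : nat, (t.+1 * k.+1 <= L)%N ->
    \rank (B *m B^T *m Phi_of (Z (t * k.+1)%N)) = k ->
    is_QR_Q (B *m B^T *m Phi_of (Z (t * k.+1)%N)) (Phi_of (Z (t.+1 * k.+1)%N)).
Proof.
move=> _ _ _ _.
exists (fun l => block_mx 0 0 0 (Vp R k l)), (fun _ => 1%:M),
  (fun l => block_mx (Ktp R d k l) 0 0 (Pp R k l)), (fun l => block_mx 0 0 0 (Rbp R k l)).
move=> src dst r _ _ _ Phi0 _ B Z t _ hr.
pose phi l := Phi_of (Z l).
have Zeq : forall l, Z l = col_mx B^T (phi l)^T.
  elim=> [|i IH]; first by rewrite /phi /Phi_of /Z /= col_mxKd trmxK.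
  by rewrite /phi /Z /= -/Z IH layer_eq /Phi_of col_mxKd !trmxK.
have phiS : forall l, phi l.+1 = colnorm (phi l + B^T^T *m (Ktp R d k l)^T *m B^T *m phi l *m (Vp R k l)^T
    + phi l *m (Pp R k l)^T *m ((phi l)^T *m phi l) *m (Vp R k l)^T + phi l *m (Rbp R k l)^T).
  move=> l; rewrite {1}/phi {1}/Z /= -/Z Zeq layer_eq /Phi_of col_mxKd; exact: trmxK.
set M := B *m B^T *m Phi_of (Z (t * k.+1)%N).
have claim : forall m, (m <= k)%N ->
  (exists S, ut S /\ M = phi (t * k.+1 + m).+1 *m S) /\
  (forall a b : 'I_k, (a < m)%N -> (b < m)%N ->
     ((phi (t * k.+1 + m).+1)^T *m phi (t * k.+1 + m).+1) a b = (a == b)%:R).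
  elim=> [_|m IH hm].
    rewrite addn0 phiS.
    have hj : jj k (t * k.+1) = 0%N by rewrite /jj modnMl.
    rewrite /Vp /Ktp /Pp /Rbp hj /=.
    rewrite trmxK trmx1 trmx0 !mulmx1 mulmx0 !mul0mx addr0 raddfN /= trmx1 mulmxN !mulmx1 addrAC subrr add0r.
    split=> [|a b]; last by []. exact: lap_inv.
  have hm' : (m <= k)%N := ltnW hm.
  have [[S [uS hS]] hG] := IH hm'.
  rewrite addnS phiS.
  have hj : jj k (t * k.+1 + m).+1 = m.+1 by rewrite /jj -addnS modnMDl modn_small.
  rewrite /Vp /Ktp /Pp /Rbp hj /=.
  set Psi := phi (t * k.+1 + m).+1.
  rewrite trmx0 !mulmx0 !mul0mx !addr0 raddfN /= tr_diag_mx mulmxN.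
  rewrite trmx0 !mulmx0 !addr0 !tr_diag_mx.
  have -> : Psi - Psi *m diag_mx (\row_i ((i : nat) < m)%:R) *m (Psi^T *m Psi) *m diag_mx (\row_i ((i : nat) == m)%:R)
    = Psi *m (1%:M - Nm m Psi) by rewrite /Nm mulmxBr mulmx1 !mulmxA.
  have := gs_step hm hr uS hS hG; rewrite /=; exact.
have [[S [uS hS]] hG] := claim k (leqnn k).
have Eidx : (t * k.+1 + k).+1 = (t.+1 * k.+1)%N by rewrite mulSn addSn [(k + _)%N]addnC.
rewrite Eidx in hS hG.
split.
  by apply/matrixP => a b; rewrite hG ?ltn_ord // mxE.
by exists S; case: uS => u1 u2; split.
Qed.
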